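(* In a pointed protomodular category, for an object $X$: if $X$ is strong-complete then it is complete${}^*$; if it is complete${}^*$ then it is complete; and if it is complete then it is proto-complete.
   Context: A pointed category with finite limits is protomodular if the split short five lemma holds. A normal monomorphism is a kernel of some morphism; a protosplit monomorphism is a kernel of a split epimorphism. A monomorphism $m:S\to Y$ is Bourn-normal if there is an equivalence relation $(R,r_1,r_2)$ on $Y$ and a morphism $\tilde m:S\times S\to R$ with $r_1\tilde m=m\pi_1$, $r_2\tilde m=m\pi_2$ such that the square $r_1\tilde m=m\pi_1$ is a pullback. An object $X$ is: proto-complete if every protosplit monomorphism with domain $X$ is a split monomorphism; complete if every normal monomorphism with domain $X$ is a split monomorphism; complete${}^*$ if every Bourn-normal monomorphism with domain $X$ is a split monomorphism; strong-complete if every protosplit monomorphism with domain $X$ is a split monomorphism with a unique retraction. *)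

(* Defs.v *)
Set Implicit Arguments.
Unset Strict Implicit.

Record Category := {
  Obj :> Type;
  Hom : Obj -> Obj -> Type;
  idm : forall A, Hom A A;
  comp : forall A B C, Hom B C -> Hom A B -> Hom A C;
  comp_id_l : forall A B (f : Hom A B), comp (idm B) f = f;
  comp_id_r : forall A B (f : Hom A B), comp f (idm A) = f;
  comp_assoc : forall A B C D (h : Hom C D) (g : Hom B C) (f : Hom A B),
      comp h (comp g f) = comp (comp h g) f
}.

Arguments Hom {c} _ _.
Arguments idm {c} A.
Arguments comp {c A B C} _ _.

Section Notions.
Variable C : Category.

Definition mono {A B : C} (m : Hom A B) : Prop :=
  forall T (x y : Hom T A), comp m x = comp m y -> x = y.

Definition iso {A B : C} (f : Hom A B) : Prop :=
  exists g : Hom B A, comp g f = idm A /\ comp f g = idm B.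

Definition split_mono {A B : C} (m : Hom A B) : Prop :=
  exists r : Hom B A, comp r m = idm A.

Definition split_mono_unique {A B : C} (m : Hom A B) : Prop :=
  exists r : Hom B A, comp r m = idm A /\
    forall r' : Hom B A, comp r' m = idm A -> r' = r.

Definition split_epi {A B : C} (f : Hom A B) : Prop :=
  exists s : Hom B A, comp f s = idm B.

Definition is_pullback {A B D P : C} (f : Hom A D) (g : Hom B D)
    (p1 : Hom P A) (p2 : Hom P B) : Prop :=
  comp f p1 = comp g p2 /\
  forall T (x : Hom T A) (y : Hom T B), comp f x = comp g y ->
    exists u : Hom T P, (comp p1 u = x /\ comp p2 u = y) /\
      forall u' : Hom T P, comp p1 u' = x -> comp p2 u' = y -> u' = u.

Definition has_pullbacks : Prop :=
  forall (A B D : C) (f : Hom A D) (g : Hom B D),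
    exists (P : C) (p1 : Hom P A) (p2 : Hom P B), is_pullback f g p1 p2.

Definition is_product {A B P : C} (p1 : Hom P A) (p2 : Hom P B) : Prop :=
  forall T (x : Hom T A) (y : Hom T B),
    exists u : Hom T P, (comp p1 u = x /\ comp p2 u = y) /\
      forall u' : Hom T P, comp p1 u' = x -> comp p2 u' = y -> u' = u.

(* (R, r1, r2) is an (internal) equivalence relation on Y: r1, r2 jointly
   monic, and for every T the relation on Hom T Y induced by R is reflexive,
   symmetric and transitive. *)
Definition equivalence_relation {R Y : C} (r1 r2 : Hom R Y) : Prop :=
  (forall T (x y : Hom T R), comp r1 x = comp r1 y -> comp r2 x = comp r2 y -> x = y) /\
  (exists d : Hom Y R, comp r1 d = idm Y /\ comp r2 d = idm Y) /\
  (exists s : Hom R R, comp r1 s = r2 /\ comp r2 s = r1) /\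
  (forall T (a b : Hom T R), comp r2 a = comp r1 b ->
     exists c : Hom T R, comp r1 c = comp r1 a /\ comp r2 c = comp r2 b).

End Notions.

Arguments mono {C A B} _.
Arguments iso {C A B} _.
Arguments split_mono {C A B} _.
Arguments split_mono_unique {C A B} _.
Arguments split_epi {C A B} _.
Arguments is_pullback {C A B D P} _ _ _ _.
Arguments is_product {C A B P} _ _.
Arguments equivalence_relation {C R Y} _ _.

Record PointedCategory := {
  pcat :> Category;
  zero_obj : pcat;
  to_zero : forall X : pcat, Hom X zero_obj;
  from_zero : forall X : pcat, Hom zero_obj X;
  to_zero_unique : forall (X : pcat) (f : Hom X zero_obj), f = to_zero X;
  from_zero_unique : forall (X : pcat) (f : Hom zero_obj X), f = from_zero X
}.

Section Pointed.
Variable C : PointedCategory.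

Definition zero_map (X Y : C) : Hom X Y := comp (@from_zero C Y) (@to_zero C X).

(* Finite limits: a terminal object (the zero object) and all pullbacks. *)
Definition finitely_complete : Prop := has_pullbacks C.

Definition is_kernel {K X Z : C} (k : Hom K X) (f : Hom X Z) : Prop :=
  comp f k = zero_map K Z /\
  forall T (x : Hom T X), comp f x = zero_map T Z ->
    exists u : Hom T K, comp k u = x /\
      forall u' : Hom T K, comp k u' = x -> u' = u.

(* Split short five lemma (pointed version): given a morphism of split
   extensions
      K --k--> A <==p,s==> B
      |u       |v          |w
      K'--k'-> A'<==p',s'=> B'
   with k a kernel of p, k' a kernel of p', p s = 1, p' s' = 1,
   v k = k' u, p' v = w p, v s = s' w, if u and w are isomorphisms then so
   is v. *)
Definition protomodular : Prop :=
  forall (K A B K' A' B' : C)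
    (k : Hom K A) (p : Hom A B) (s : Hom B A)
    (k' : Hom K' A') (p' : Hom A' B') (s' : Hom B' A')
    (u : Hom K K') (v : Hom A A') (w : Hom B B'),
    is_kernel k p -> comp p s = idm B ->
    is_kernel k' p' -> comp p' s' = idm B' ->
    comp v k = comp k' u -> comp p' v = comp w p -> comp v s = comp s' w ->
    iso u -> iso w -> iso v.

Definition normal_mono {S Y : C} (m : Hom S Y) : Prop :=
  exists (Z : C) (f : Hom Y Z), is_kernel m f.

Definition protosplit_mono {S Y : C} (m : Hom S Y) : Prop :=
  exists (Z : C) (f : Hom Y Z), split_epi f /\ is_kernel m f.

Definition bourn_normal {S Y : C} (m : Hom S Y) : Prop :=
  mono m /\
  exists (R : C) (r1 r2 : Hom R Y), equivalence_relation r1 r2 /\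
  exists (SS : C) (pi1 pi2 : Hom SS S), is_product pi1 pi2 /\
  exists mt : Hom SS R,
    comp r1 mt = comp m pi1 /\ comp r2 mt = comp m pi2 /\
    is_pullback r1 m mt pi1.

Definition proto_complete (X : C) : Prop :=
  forall (Y : C) (m : Hom X Y), protosplit_mono m -> split_mono m.

Definition complete (X : C) : Prop :=
  forall (Y : C) (m : Hom X Y), normal_mono m -> split_mono m.

Definition complete_star (X : C) : Prop :=
  forall (Y : C) (m : Hom X Y), bourn_normal m -> split_mono m.

Definition strong_complete (X : C) : Prop :=
  forall (Y : C) (m : Hom X Y), protosplit_mono m -> split_mono_unique m.

End Pointed.

Arguments zero_map {C} X Y.
Arguments is_kernel {C K X Z} _ _.
Arguments normal_mono {C S Y} _.
Arguments protosplit_mono {C S Y} _.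
Arguments bourn_normal {C S Y} _.
Arguments proto_complete {C} X.
Arguments complete {C} X.
Arguments complete_star {C} X.
Arguments strong_complete {C} X.

(* Main.v *)
Require Import Defs.

Section S.
Variable C : PointedCategory.

Lemma zero_comp_r (T X Z : C) (x : Hom T X) :
  comp (zero_map X Z) x = zero_map T Z.
Proof.
  unfold zero_map. rewrite <- comp_assoc. f_equal. apply to_zero_unique.
Qed.

Lemma zero_comp_l (X Y Z : C) (g : Hom Y Z) :
  comp g (zero_map X Y) = zero_map X Z.
Proof.
  unfold zero_map. rewrite comp_assoc. f_equal. apply from_zero_unique.
Qed.

Lemma kernel_mono (K X Z : C) (k : Hom K X) (f : Hom X Z) :
  is_kernel k f -> mono k.
Proof.
  intros [H0 H] T a b E.
  assert (Ha : comp f (comp k a) = zero_map T Z)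
    by (rewrite comp_assoc, H0; apply zero_comp_r).
  destruct (H T (comp k a) Ha) as [u [_ Hu]].
  rewrite (Hu a eq_refl), (Hu b (eq_sym E)). reflexivity.
Qed.

Lemma prod_of_pb (A B P : C) (p1 : Hom P A) (p2 : Hom P B) :
  is_pullback (to_zero A) (to_zero B) p1 p2 -> is_product p1 p2.
Proof.
  intros [_ H] T x y.
  apply H. rewrite (to_zero_unique (comp _ x)), (to_zero_unique (comp _ y)).
  reflexivity.
Qed.

Lemma kp_equiv (R Y Z : C) (f : Hom Y Z) (r1 r2 : Hom R Y) :
  is_pullback f f r1 r2 -> equivalence_relation r1 r2.
Proof.
  intros [Hc H]. split; [|split; [|split]].
  - intros T x y E1 E2.
    assert (Hx : comp f (comp r1 x) = comp f (comp r2 x))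
      by (rewrite !comp_assoc, Hc; reflexivity).
    destruct (H T _ _ Hx) as [u [_ Hu]].
    rewrite (Hu x eq_refl eq_refl), (Hu y (eq_sym E1) (eq_sym E2)). reflexivity.
  - destruct (H Y (idm Y) (idm Y) eq_refl) as [d [[E1 E2] _]]. exists d. auto.
  - assert (Hx : comp f r2 = comp f r1) by auto.
    destruct (H R _ _ Hx) as [s [[E1 E2] _]]. exists s. auto.
  - intros T a b E.
    assert (Hx : comp f (comp r1 a) = comp f (comp r2 b)).
    { rewrite !comp_assoc, Hc, <- !comp_assoc, E, !comp_assoc, Hc. reflexivity. }
    destruct (H T _ _ Hx) as [c [[E1 E2] _]]. exists c. auto.
Qed.

End S.

Theorem proposition4p7 (C : PointedCategory)
  (Hlim : finitely_complete C) (Hproto : protomodular C) (X : C) :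
  (strong_complete X -> complete_star X) /\
  (complete_star X -> complete X) /\
  (complete X -> proto_complete X).
Proof.
  split; [|split].
  -
    intros HS Y m [Hm [R [r1 [r2 [Heq [SS [pi1 [pi2 [Hprod [mt [E1 [E2 Hpb]]]]]]]]]]]].
    destruct Heq as [Hjm [[d [Hd1 Hd2]] _]].
    destruct (Hprod X (zero_map X X) (idm X)) as [k [[Hk1 Hk2] _]].
    destruct (Hprod X (idm X) (idm X)) as [dl [[Hdl1 Hdl2] _]].
    assert (Hkker : is_kernel k pi1).
    { split; [exact Hk1|].
      intros T x Hx. exists (comp pi2 x). split.
      - destruct (Hprod T (comp pi1 x) (comp pi2 x)) as [u [_ Hu]].
        transitivity u; [apply Hu|symmetry; apply Hu; auto].
        + rewrite comp_assoc, Hk1, zero_comp_r. symmetry; exact Hx.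
        + rewrite comp_assoc, Hk2, comp_id_l. reflexivity.
      - intros u' Hu'. rewrite <- Hu', comp_assoc, Hk2, comp_id_l. reflexivity. }
    assert (Hkps : protosplit_mono k).
    { exists X, pi1. split; [exists dl; exact Hdl1 | exact Hkker]. }
    assert (Hmtk : is_kernel (comp mt k) r1).
    { destruct Hpb as [Hpc Hpu]. split.
      - rewrite comp_assoc, E1, <- comp_assoc, Hk1. apply zero_comp_l.
      - intros T x Hx.
        assert (Hx' : comp r1 x = comp m (zero_map T X))
          by (rewrite zero_comp_l; exact Hx).
        destruct (Hpu T x _ Hx') as [u [[Hu1 Hu2] Hu]].
        assert (Hku : comp k (comp pi2 u) = u).
        { destruct (Hprod T (zero_map T X) (comp pi2 u)) as [v [_ Hv]].
          transitivity v; [apply Hv|symmetry; apply Hv; auto].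
          + rewrite comp_assoc, Hk1. apply zero_comp_r.
          + rewrite comp_assoc, Hk2. apply comp_id_l. }
        exists (comp pi2 u). split.
        + rewrite <- comp_assoc, Hku. exact Hu1.
        + intros w Hw.
          assert (Hkw : comp k w = u).
          { apply Hu.
            - rewrite comp_assoc. exact Hw.
            - rewrite comp_assoc, Hk1. apply zero_comp_r. }
          rewrite <- Hkw, comp_assoc, Hk2, comp_id_l. reflexivity. }
    assert (Hmtkps : protosplit_mono (comp mt k)).
    { exists Y, r1. split; [exists d; exact Hd1 | exact Hmtk]. }
    destruct (HS _ _ Hmtkps) as [rho [Hrho _]].
    destruct (HS _ _ Hkps) as [r0 [_ Hr0]].
    assert (Hrm : comp rho mt = pi2).
    { rewrite (Hr0 (comp rho mt)), (Hr0 pi2); auto.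
      rewrite <- comp_assoc. exact Hrho. }
    assert (Hmd : comp mt dl = comp d m).
    { apply Hjm.
      - rewrite !comp_assoc, E1, Hd1, <- comp_assoc, Hdl1, comp_id_l, comp_id_r.
        reflexivity.
      - rewrite !comp_assoc, E2, Hd2, <- comp_assoc, Hdl2, comp_id_l, comp_id_r.
        reflexivity. }
    exists (comp rho d). rewrite <- comp_assoc, <- Hmd, comp_assoc, Hrm. exact Hdl2.
  -
    intros HC Y m [Z [f Hker]]. apply HC.
    pose proof (@kernel_mono C _ _ _ _ _ Hker) as Hm.
    destruct Hker as [Hf0 Hfu].
    destruct (Hlim Y Y Z f f) as [R [r1 [r2 Hkp]]].
    pose proof (@kp_equiv C _ _ _ _ _ _ Hkp) as Heq.
    destruct (Hlim X X (zero_obj C) (to_zero X) (to_zero X)) as [SS [pi1 [pi2 Hpp]]].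
    pose proof (@prod_of_pb C _ _ _ _ _ Hpp) as Hprod.
    destruct Hkp as [Hkc Hku].
    assert (Hmm : comp f (comp m pi1) = comp f (comp m pi2))
      by (rewrite !comp_assoc, Hf0, !zero_comp_r; reflexivity).
    destruct (Hku SS _ _ Hmm) as [mt [[E1 E2] _]].
    split; [exact Hm|].
    exists R, r1, r2. split; [exact Heq|].
    exists SS, pi1, pi2. split; [exact Hprod|].
    exists mt. split; [exact E1|]. split; [exact E2|].
    split; [exact E1|].
    intros T x y Hxy.
    assert (Hz : comp f (comp r2 x) = zero_map T Z).
    { rewrite comp_assoc, <- Hkc, <- comp_assoc, Hxy, comp_assoc, Hf0.
      apply zero_comp_r. }
    destruct (Hfu T _ Hz) as [z [Hmz _]].
    destruct (Hprod T y z) as [u [[Hu1 Hu2] Hu]].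
    destruct Heq as [Hjm _].
    exists u. split; [split|].
    + apply Hjm.
      * rewrite comp_assoc, E1, <- comp_assoc, Hu1. symmetry; exact Hxy.
      * rewrite comp_assoc, E2, <- comp_assoc, Hu2. exact Hmz.
    + exact Hu1.
    + intros u' H1 H2. apply Hu; [exact H2|].
      apply Hm. rewrite Hmz, <- H1, (comp_assoc r2 mt u'), E2, comp_assoc. reflexivity.
  -
    intros HC Y m [Z [f [_ Hk]]]. apply HC. exists Z, f. exact Hk.
Qed.
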